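(* Let $p\in(0,1)$, let $(a_j)_{j\ge1}$ be positive rational numbers with $\sum_{j=1}^\infty a_j=p$, and let $\epsilon:\mathbb N\to\mathbb R$ be a monotonically non-increasing function with $\lim_{N\to\infty}\epsilon(N)=0$ and $p-\sum_{j=1}^N a_j\le \epsilon(N)$ for every $N\in\mathbb N$. Let $X_1,X_2,\dots$ be independent Bernoulli random variables with parameter $1/2$, and run the algorithm described in the context on these data. Then: (1) the algorithm terminates with probability $1$; (2) its output $Y$ is a Bernoulli random variable with parameter $p$, i.e. $\Pr[Y=1]=p$; (3) if each term $a_j$ and each value $\epsilon(N)$ can be computed with a finite number of operations involving rational numbers, then the algorithm can be implemented using rational arithmetic only.
   Context: The algorithm (with inputs $(a_j)$, $\epsilon$, and the coins $X_1,X_2,\dots$) is as follows. Initialise $N\leftarrow0$, $S\leftarrow0$, $E\leftarrow1$, $A\leftarrow0$, $s\leftarrow0$, $k\leftarrow0$. Repeat the following iteration: set $k\leftarrow k+1$ and $A\leftarrow A+s\cdot2^{-k}$; then, while none of the three conditions (i) $S+E\le A+2^{-k}$, (ii) $S>A+2^{-k}$, (iii) $S>A+\tfrac12 2^{-k}$ and $S+E\le A+\tfrac32 2^{-k}$ holds, do $N\leftarrow N+1$, $S\leftarrow S+a_N$, $E\leftarrow\epsilon(N)$; after this inner loop, set $s\leftarrow0$ if (i) holds, else $s\leftarrow2$ if (ii) holds, else $s\leftarrow1$. The iteration is repeated until $X_k=0$ (the coin $X_k$ is read at the end of iteration $k$). After the last iteration, output $Y=0$ if $s=0$, $Y=1$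 if $s=2$, and $Y=X_{k+1}$ if $s=1$. *)

(* Defs.v *)
From HB Require Import structures.
From mathcomp Require Import all_boot all_order all_algebra.
From mathcomp Require Import all_classical all_reals all_analysis.
Set Implicit Arguments. Unset Strict Implicit. Unset Printing Implicit Defensive.
Import Order.TTheory GRing.Theory Num.Theory.
Import numFieldNormedType.Exports.
Local Open Scope ring_scope.

(** The algorithm of the paper, written generically over an ordered field F
    (so that it can be run over the reals or over the rationals).
    Inputs: a : nat -> F (a j = a_j, only j >= 1 used),
            eps : nat -> F (only eps N, N >= 1, used),
            c : nat -> bool (c k = X_k, true means X_k = 1; only k >= 1 used). *)

Record alg_state (F : Type) := AlgState {
  stN : nat;
  stS : F;
  stE : F;
  stA : F;
  sts : nat;      (* s in {0,1,2} *)
  stk : nat;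
  st_inner : bool (* false: at the start of an outer iteration;
                     true: inside the inner while loop of iteration k *)
}.

Definition alg_init (F : realFieldType) : alg_state F :=
  AlgState 0 0 1 0 0 0 false.

(** One elementary step: either a new state (inl) or termination with
    output Y (inr Y, true meaning Y = 1). *)
Definition alg_step (F : realFieldType) (a eps : nat -> F) (c : nat -> bool)
    (x : alg_state F) : alg_state F + bool :=
  let: AlgState N S0 E A s k inner := x in
  if ~~ inner then
    inl (AlgState N S0 E (A + s%:R * (2%:R ^- k.+1)) s k.+1 true)
  else
    let h := (2%:R : F) ^- k in
    let c1 := S0 + E <= A + h in
    let c2 := A + h < S0 in
    let c3 := (A + h / 2%:R < S0) && (S0 + E <= A + 3%:R / 2%:R * h) in
    if [|| c1, c2 | c3] then
      let s' := if c1 then 0%N else if c2 then 2%N else 1%N in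
      if c k then
        inl (AlgState N S0 E A s' k false)
      else
        inr (if s' == 0%N then false else if s' == 2%N then true else c k.+1)
    else
      inl (AlgState N.+1 (S0 + a N.+1) (eps N.+1) A s k true).

(** Run for at most [fuel] elementary steps; [None] = not (yet) terminated. *)
Fixpoint alg_run_from (F : realFieldType) (a eps : nat -> F) (c : nat -> bool)
    (fuel : nat) (x : alg_state F) : option bool :=
  match fuel with
  | 0 => None
  | n.+1 =>
      match alg_step a eps c x with
      | inl y => alg_run_from a eps c n y
      | inr b => Some b
      end
  end.

Definition alg_run (F : realFieldType) (a eps : nat -> F) (c : nat -> bool)
    (fuel : nat) : option bool :=
  alg_run_from a eps c fuel (alg_init F).

Section Prob.
Local Open Scope classical_set_scope.
Context (d : measure_display) (T : measurableType d) (R : realType).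

Definition fair_bernoulli (P : probability T R) (X : nat -> T -> bool) : Prop :=
  forall k, (0 < k)%N ->
    measurable [set w | X k w = true] /\
    P [set w | X k w = true] = (2%:R^-1 : R)%:E.

Definition mutually_independent (P : probability T R) (X : nat -> T -> bool) : Prop :=
  forall (s : seq nat) (b : nat -> bool), uniq s -> all (fun i => 0 < i)%N s ->
    P [set w | forall i, i \in s -> X i w = b i] =
    (\prod_(i <- s) P [set w | X i w = b i])%E.

Definition alg_terminates (a eps : nat -> R) (X : nat -> T -> bool) : set T :=
  [set w | exists n, alg_run a eps (fun k => X k w) n != None].

Definition alg_outputs_one (a eps : nat -> R) (X : nat -> T -> bool) : set T :=
  [set w | exists n, alg_run a eps (fun k => X k w) n = Some true].
End Prob.

(* Main.v *)
Require Import Defs.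
From HB Require Import structures.
From mathcomp Require Import all_boot all_order all_algebra.
From mathcomp Require Import all_classical all_reals all_analysis.
From mathcomp Require Import lra.
Set Implicit Arguments. Unset Strict Implicit. Unset Printing Implicit Defensive.
Import Order.TTheory GRing.Theory Num.Theory.
Import numFieldNormedType.Exports.
Local Open Scope ring_scope.
Local Open Scope classical_set_scope.

Section Run.
Variables (F : realFieldType) (a eps : nat -> F) (c : nat -> bool).

Fixpoint steps (m : nat) (x : alg_state F) : option (alg_state F) :=
  match m with
  | 0 => Some x
  | m.+1 => match alg_step a eps c x with
            | inl y => steps m y
            | inr _ => None end
  end.

Lemma steps_S m x : steps m.+1 x =
  match alg_step a eps c x with inl y => steps m y | inr _ => None end.
Proof. by []. Qed.

Lemma run_S n x : alg_run_from a eps c n.+1 x =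
  match alg_step a eps c x with inl y => alg_run_from a eps c n y | inr b => Some b end.
Proof. by []. Qed.

Lemma steps_cat m1 m2 x y : steps m1 x = Some y -> steps (m1 + m2) x = steps m2 y.
Proof.
elim: m1 x => [|m IH] x /=; first by case=> ->.
by case: (alg_step a eps c x) => // z; apply: IH.
Qed.

Lemma run_steps m n x y : steps m x = Some y ->
  alg_run_from a eps c (m + n) x = alg_run_from a eps c n y.
Proof.
elim: m x => [|m IH] x /=; first by case=> ->.
by case: (alg_step a eps c x) => // z; apply: IH.
Qed.

Lemma run_steps_None m n x y : steps m x = Some y -> (n <= m)%N ->
  alg_run_from a eps c n x = None.
Proof.
elim: m n x => [|m IH] [|n] x //=.
by case: (alg_step a eps c x) => // z H; apply: IH.
Qed.

Lemma run_mono n m x b : alg_run_from a eps c n x = Some b ->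
  alg_run_from a eps c (n + m) x = Some b.
Proof.
elim: n x => [|n IH] x //=.
by case: (alg_step a eps c x) => // z; apply: IH.
Qed.

Lemma run_det n m x b b' : alg_run_from a eps c n x = Some b ->
  alg_run_from a eps c m x = Some b' -> b = b'.
Proof.
move=> /(run_mono m) H1 /(run_mono n); rewrite addnC H1; by case.
Qed.
End Run.

Section Det.
Variables (R : realType) (p : R) (a eps : nat -> R).
Definition Sn N := \sum_(1 <= j < N.+1) a j.
Definition En N := if N is 0 then 1 else eps N.
Definition hk k : R := 2%:R ^- k.
Definition cond A k N : bool :=
  [|| Sn N + En N <= A + hk k, A + hk k < Sn N |
      (A + hk k / 2%:R < Sn N) && (Sn N + En N <= A + 3%:R / 2%:R * hk k)].

Hypotheses (p01 : 0 < p < 1) (apos : forall j, (0 < j)%N -> 0 < a j)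
  (Scv : Sn n @[n --> \oo] --> p) (eps0 : eps n @[n --> \oo] --> (0:R))
  (Hpe : forall N, (0 < N)%N -> p - Sn N <= eps N).

Lemma SnS N : Sn N.+1 = Sn N + a N.+1.
Proof. by rewrite /Sn big_nat_recr. Qed.

Lemma Sn0 : Sn 0 = 0.
Proof. by rewrite /Sn big_geq. Qed.

Lemma Sn_le_p N : Sn N <= p.
Proof.
have nd : nondecreasing_seq Sn.
  apply/nondecreasing_seqP => n; rewrite SnS lerDl ltW //; exact: apos.
have := nondecreasing_cvgn_le nd (cvgP _ Scv) N.
by rewrite (cvg_lim _ Scv).
Qed.

Lemma Sn_lt_p N : Sn N < p.
Proof. by apply: (lt_le_trans _ (Sn_le_p N.+1)); rewrite SnS ltrDl apos. Qed.

Lemma p_le N : p <= Sn N + En N.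
Proof.
case: N => [|N] /=; first by rewrite Sn0 add0r; case/andP: p01 => _ /ltW.
by rewrite -lerBlDl; apply: Hpe.
Qed.

Lemma ev_ex (P : nat -> Prop) N0 : (\forall n \near \oo, P n) -> exists N, (N0 <= N)%N /\ P N.
Proof.
case=> M _ HM; exists (maxn N0 M); split; first exact: leq_maxl.
by apply: HM; rewrite /= leq_maxr.
Qed.

Lemma inner_ex A k N0 : exists N, (N0 <= N)%N && cond A k N.
Proof.
have hp : 0 < hk k by rewrite /hk invr_gt0 exprn_gt0.
case: (ltgtP p (A + hk k)) => Hp.
- have dp : 0 < A + hk k - p by rewrite subr_gt0.
  have [N [HN HE]] := ev_ex (maxn N0 1) (cvgr_lt _ eps0 _ dp).
  have N0N : (N0 <= N)%N by apply: leq_trans HN; exact: leq_maxl.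
  have N1 : (0 < N)%N by apply: leq_trans HN; exact: leq_maxr.
  exists N; rewrite N0N /= /cond; apply/orP; left.
  case: N N1 HN N0N HE => // N _ _ _ HE /=.
  have := Sn_lt_p N.+1; lra.
- have [N [HN HE]] := ev_ex N0 (cvgr_gt _ Scv _ Hp).
  by exists N; rewrite HN /cond HE orbT.
- have h2 : 0 < hk k / 2%:R by rewrite divr_gt0.
  have Hp2 : A + hk k / 2%:R < p by rewrite Hp ltrD2l gtr_pMr // invf_lt1 // ltr1n.
  have E1 := cvgr_gt _ Scv _ Hp2.
  have E2 := cvgr_lt _ eps0 _ h2.
  have [N [HN [HE1 HE2]]] : exists N, (maxn N0 1 <= N)%N /\ (A + hk k / 2%:R < Sn N /\ eps N < hk k / 2%:R).
    apply: ev_ex; near=> n; split; near: n; [exact: E1|exact: E2].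
  have N0N : (N0 <= N)%N by apply: leq_trans HN; exact: leq_maxl.
  have N1 : (0 < N)%N by apply: leq_trans HN; exact: leq_maxr.
  exists N; rewrite N0N /= /cond; apply/orP; right; apply/orP; right.
  rewrite HE1 /=.
  case: N N1 HN N0N HE1 HE2 => // N _ _ _ HE1 HE2 /=.
  have := Sn_lt_p N.+1; lra.
Unshelve. all: by end_near.
Qed.

Definition innerN N0 A k : nat := ex_minn (inner_ex A k N0).
Definition sval A k N : nat :=
  if Sn N + En N <= A + hk k then 0%N else if A + hk k < Sn N then 2%N else 1%N.
Definition outb (s : nat) (b : bool) : bool :=
  if s == 0%N then false else if s == 2%N then true else b.
Definition St N A s k := AlgState N (Sn N) (En N) A s k true.

Lemma step_inner c N A s k : alg_step a eps c (St N A s k) =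
  if cond A k N then
    (if c k then inl (AlgState N (Sn N) (En N) A (sval A k N) k false)
     else inr (outb (sval A k N) (c k.+1)))
  else inl (St N.+1 A s k).
Proof.
rewrite /= /cond /sval /hk /outb; case: ifP => // _.
by rewrite /St SnS.
Qed.

Lemma innerN_spec N0 A k : (N0 <= innerN N0 A k)%N /\ cond A k (innerN N0 A k) /\
  (forall N, (N0 <= N < innerN N0 A k)%N -> cond A k N = false).
Proof.
rewrite /innerN; case: ex_minnP => m /andP[H1 H2] Hmin; split => //; split => //.
move=> N /andP[HN1 HN2]; apply/negbTE/negP => HC.
by have := Hmin N; rewrite HN1 HC => /(_ isT); rewrite leqNgt HN2.
Qed.

Lemma inner_steps c N0 A s k :
  steps a eps c (innerN N0 A k - N0) (St N0 A s k) = Some (St (innerN N0 A k) A s k).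
Proof.
have [H1 [_ H3]] := innerN_spec N0 A k.
move: H1 H3; set M := innerN N0 A k; clearbody M.
move HD : (M - N0)%N => d.
elim: d N0 HD => [|d IH] N0 HD H1 H3.
  by have -> : N0 = M by apply/eqP; rewrite eqn_leq H1 -subn_eq0 HD.
have lt : (N0 < M)%N by rewrite -subn_gt0 HD.
rewrite steps_S step_inner H3 ?leqnn //; apply: IH.
- by rewrite subnS HD.
- exact: lt.
- by move=> N /andP[HN1 HN2]; apply: H3; rewrite HN2 ltnW.
Qed.

Fixpoint outer (K : nat) : nat * R * nat :=
  match K with
  | 0 => (0%N, 0, 0%N)
  | K'.+1 => let o := outer K' in
      let A' := o.1.2 + (o.2)%:R * hk K in
      let N' := innerN o.1.1 A' K in (N', A', sval A' K N')
  end.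
Definition oN K := (outer K).1.1.
Definition oA K := (outer K).1.2.
Definition os K := (outer K).2.
Definition Ap K := oA K + (os K)%:R * hk K.+1.
Definition Ostate K := AlgState (oN K) (Sn (oN K)) (En (oN K)) (oA K) (os K) K false.
Definition dK K := (innerN (oN K) (Ap K) K.+1 - oN K)%N.
Fixpoint Mcount K := match K with 0 => 0%N | K'.+1 => (Mcount K' + ((dK K').+1 + 1))%N end.

Lemma oNS K : oN K.+1 = innerN (oN K) (Ap K) K.+1. Proof. by []. Qed.
Lemma oAS K : oA K.+1 = Ap K. Proof. by []. Qed.
Lemma osS K : os K.+1 = sval (Ap K) K.+1 (oN K.+1). Proof. by []. Qed.

Lemma reach_inner K (c : nat -> bool) : (forall i, (0 < i <= K)%N -> c i) ->
  steps a eps c (Mcount K) (alg_init R) = Some (Ostate K) ->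
  steps a eps c (Mcount K + (dK K).+1) (alg_init R) = Some (St (oN K.+1) (Ap K) (os K) K.+1).
Proof.
move=> Hc H; rewrite (steps_cat _ H) steps_S.
have -> : alg_step a eps c (Ostate K) = inl (St (oN K) (Ap K) (os K) K.+1) by [].
exact: inner_steps.
Qed.

Lemma reach K (c : nat -> bool) : (forall i, (0 < i <= K)%N -> c i) ->
  steps a eps c (Mcount K) (alg_init R) = Some (Ostate K).
Proof.
elim: K => [|K IH] Hc.
  by rewrite /Ostate /= Sn0.
have IH' : steps a eps c (Mcount K) (alg_init R) = Some (Ostate K).
  by apply: IH => i /andP[i0 iK]; apply: Hc; rewrite i0 ltnW.
have Hc' : forall i, (0 < i <= K)%N -> c i.
  by move=> i /andP[i0 iK]; apply: Hc; rewrite i0 ltnW.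
rewrite /= addnA (steps_cat _ (reach_inner Hc' IH')) steps_S step_inner.
have [_ [-> _]] := innerN_spec (oN K) (Ap K) K.+1.
by rewrite Hc // leqnn.
Qed.

Lemma exit K (c : nat -> bool) : (forall i, (0 < i <= K)%N -> c i) -> c K.+1 = false ->
  alg_run a eps c (Mcount K + ((dK K).+1 + 1)) = Some (outb (os K.+1) (c K.+2)).
Proof.
move=> Hc HK; rewrite /alg_run addnA (run_steps _ (reach_inner Hc (reach Hc))).
have -> : forall y, alg_run_from a eps c 1 y =
  match alg_step a eps c y with inl _ => None | inr b => Some b end.
  by move=> y /=; case: alg_step.
rewrite step_inner.
have [_ [-> _]] := innerN_spec (oN K) (Ap K) K.+1.
by rewrite HK.
Qed.

Lemma Mcount_ge K : (K <= Mcount K)%N.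
Proof. elim: K => //= K IH; rewrite addn1 addnS ltnS; exact: leq_trans IH (leq_addr _ _). Qed.

Lemma first_false (c : nat -> bool) n : (forall i, (0 < i <= n)%N -> c i) \/
  exists K, (K < n)%N /\ (forall i, (0 < i <= K)%N -> c i) /\ c K.+1 = false.
Proof.
elim: n => [|n [IH|[K [HK IH]]]].
- by left => i; rewrite leqn0 => /andP[/lt0n_neq0/negbTE ->].
- case E : (c n.+1).
    left => i /andP[i0]; rewrite leq_eqVlt => /orP[/eqP -> //|]; rewrite ltnS => iK.
    by apply: IH; rewrite i0.
  by right; exists n; split.
- by right; exists K; split => //; rewrite ltnW.
Qed.

Lemma run_char (c : nat -> bool) b : (exists n, alg_run a eps c n = Some b) <->
  exists K, [/\ (forall i, (0 < i <= K)%N -> c i), c K.+1 = false &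
                 b = outb (os K.+1) (c K.+2)].
Proof.
split.
- case=> n Hn; case: (first_false c n) => [Hall|[K [_ [Hc HK]]]].
    have := run_steps_None (reach Hall) (Mcount_ge n).
    by rewrite /alg_run in Hn; rewrite Hn.
  exists K; split => //; exact: run_det Hn (exit Hc HK).
- case=> K [Hc HK ->]; eexists; exact: exit.
Qed.

Lemma term_char (c : nat -> bool) : (exists n, alg_run a eps c n != None) <->
  exists K, (forall i, (0 < i <= K)%N -> c i) /\ c K.+1 = false.
Proof.
split.
- case=> n; case E : (alg_run a eps c n) => [b|] // _.
  have [|K [H1 H2 _]] := (run_char c b).1; first by exists n.
  by exists K.
- case=> K [H1 H2]; exists (Mcount K + ((dK K).+1 + 1))%N; by rewrite exit.
Qed.

Lemma hk_gt0 k : 0 < hk k.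
Proof. by rewrite /hk invr_gt0 exprn_gt0. Qed.

Lemma hkS k : hk k.+1 = hk k / 2%:R.
Proof. by rewrite /hk exprS invfM mulrC. Qed.

Lemma inv K : (Ap K < p <= Ap K + 2%:R * hk K.+1) /\ (os K <= 2)%N.
Proof.
elim: K => [|K [/andP[IH1 IH2] _]].
  rewrite /Ap /oA /os /= mul0r addr0 /hk expr1 divff ?pnatr_eq0 //.
  by rewrite add0r; case/andP: p01 => -> /ltW ->.
rewrite /Ap oAS osS.
have [_ [Hc _]] := innerN_spec (oN K) (Ap K) K.+1.
rewrite -oNS in Hc.
move: Hc; rewrite /cond /sval (hkS K.+1).
have hp := hk_gt0 K.+1.
have Sp := Sn_lt_p (oN K.+1); have pS := p_le (oN K.+1).
set S := Sn _ in Sp pS *; set E := En _ in pS *; set A := Ap K in IH1 IH2 *.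
set h := hk K.+1 in hp IH2 *.
case: ifP => [H1 _|H1].
  by split => //; apply/andP; split; lra.
case: ifP => [H2 _|H2 /= /andP[H3 H4]].
  by split => //; apply/andP; split; lra.
by split => //; apply/andP; split; lra.
Qed.

Lemma oA_cvg : oA n.+1 @[n --> \oo] --> p.
Proof.
have Hg : geometric 1 (2%:R^-1 : R) @ \oo --> 0.
  apply: cvg_geometric; rewrite ger0_norm ?invr_ge0 ?ler0n //.
  by rewrite invf_lt1 ?ltr1n.
have Hf : ((fun=> p) - geometric 1 (2%:R^-1 : R)) @ \oo --> p.
  by rewrite -[X in _ --> X]subr0; apply: cvgB => //; exact: cvg_cst.
apply: (@squeeze_cvgr _ _ _ _ ((fun=> p) - geometric 1 (2%:R^-1 : R)) (fun=> p) (fun n => oA n.+1) _ p Hf (cvg_cst p)).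
near=> n; rewrite oAS /=.
have [/andP[H1 H2] _] := inv n.
have -> : ((fun=> p) - geometric 1 (2%:R^-1 : R)) n = p - 2%:R * hk n.+1.
  rewrite /= /hk exprS invfM mulrA divff ?mul1r ?pnatr_eq0 //.
  apply: (@eq_trans _ _ (p - 1 * (2%:R^-1)^+n)); first by []. by rewrite mul1r exprVn.
apply/andP; split; lra.
Unshelve. all: by end_near.
Qed.
End Det.

Section RatSim.
Variables (R : realType) (a e : nat -> rat) (eps : nat -> R) (c : nat -> bool).
Hypothesis He : forall N, (0 < N)%N -> eps N = ratr (e N).

Definition mst (x : alg_state rat) : alg_state R :=
  AlgState (stN x) (ratr (stS x)) (ratr (stE x)) (ratr (stA x)) (sts x) (stk x) (st_inner x).

Lemma ratr_h k : ratr (2%:R ^- k : rat) = 2%:R ^- k :> R.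
Proof. by rewrite fmorphV rmorphXn rmorph_nat. Qed.

Lemma ratr_32 : ratr (3%:R / 2%:R : rat) = 3%:R / 2%:R :> R.
Proof. by rewrite fmorph_div !rmorph_nat. Qed.

Lemma ratr_2 : ratr (2%:R : rat) = 2%:R :> R.
Proof. by rewrite rmorph_nat. Qed.

Lemma step_sim x : alg_step (fun j => ratr (a j)) eps c (mst x) =
  match alg_step a e c x with inl y => inl (mst y) | inr b => inr b end.
Proof.
case: x => N S E A s k [|] /=; last first.
  congr (inl (AlgState _ _ _ _ _ _ _)); by rewrite rmorphD rmorphM rmorph_nat fmorphV rmorphXn rmorph_nat.
have E1 : (ratr S + ratr E <= ratr A + 2%:R ^- k :> R) = (S + E <= A + 2%:R ^- k).
  by rewrite -ratr_h -!rmorphD ler_rat.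
have E2 : (ratr A + 2%:R ^- k < ratr S :> R) = (A + 2%:R ^- k < S).
  by rewrite -ratr_h -!rmorphD ltr_rat.
have E3 : (ratr A + 2%:R ^- k / 2%:R < ratr S :> R) = (A + 2%:R ^- k / 2%:R < S).
  by rewrite -ratr_h -ratr_2 -fmorph_div -!rmorphD ltr_rat.
have E4 : (ratr S + ratr E <= ratr A + 3%:R / 2%:R * 2%:R ^- k :> R) =
          (S + E <= A + 3%:R / 2%:R * 2%:R ^- k).
  by rewrite -ratr_h -ratr_32 -rmorphM -!rmorphD ler_rat.
rewrite E1 E2 E3 E4.
case: ifP => _; first by case: (c k).
by rewrite /mst /= rmorphD He.
Qed.

Lemma run_sim n x : alg_run_from (fun j => ratr (a j)) eps c n (mst x) =
  alg_run_from a e c n x.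
Proof.
elim: n x => [|n IH] x //.
rewrite !run_S step_sim; case: (alg_step a e c x) => //.
Qed.

Lemma alg_run_sim n : alg_run (fun j => ratr (a j)) eps c n = alg_run a e c n.
Proof.
rewrite /alg_run -run_sim; congr alg_run_from.
by rewrite /mst /alg_init /= rmorph0 rmorph1.
Qed.
End RatSim.

Section Prob.
Local Open Scope classical_set_scope.
Context (d : measure_display) (T : measurableType d) (R : realType)
  (P : probability T R) (X : nat -> T -> bool).
Hypotheses (HX : fair_bernoulli P X) (HI : mutually_independent P X).

Definition Cyl (s : seq nat) (b : nat -> bool) : set T :=
  [set w | forall i, i \in s -> X i w = b i].

Lemma mX i b : (0 < i)%N -> measurable [set w | X i w = b].
Proof.
move=> i0; have [m1 _] := HX i0.
case: b => //.
have -> : [set w | X i w = false] = ~` [set w | X i w = true].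
  by apply/seteqP; split => w /=; case: (X i w).
exact: measurableC.
Qed.

Lemma PX i b : (0 < i)%N -> P [set w | X i w = b] = (2%:R^-1 : R)%:E.
Proof.
move=> i0; have [m1 P1] := HX i0.
case: b => //.
have -> : [set w | X i w = false] = ~` [set w | X i w = true].
  by apply/seteqP; split => w /=; case: (X i w).
rewrite probability_setC // P1 -EFinB; congr (_%:E).
by rewrite {1}(splitr 1) mul1r addrK.
Qed.

Lemma mCyl s b : all (fun i => 0 < i)%N s -> measurable (Cyl s b).
Proof.
elim: s => [|i s IH] /=.
  move=> _; have -> : Cyl [::] b = setT by apply/seteqP; split => w //=.
  exact: measurableT.
case/andP => i0 Hs.
have -> : Cyl (i :: s) b = [set w | X i w = b i] `&` Cyl s b.
  apply/seteqP; split => w /=.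
    by move=> H; split; [apply: H; rewrite inE eqxx | move=> j js; apply: H; rewrite inE js orbT].
  by case=> H1 H2 j; rewrite inE => /orP[/eqP -> //|]; apply: H2.
apply: measurableI; [exact: mX | exact: IH].
Qed.

Lemma PCyl s b : uniq s -> all (fun i => 0 < i)%N s ->
  P (Cyl s b) = (((2%:R^-1 : R)) ^+ size s)%:E.
Proof.
move=> us ps; rewrite /Cyl (HI b us ps).
elim: s {us} ps => [|i s IH] /=; first by rewrite big_nil.
case/andP => i0 Hs.
by rewrite big_cons PX // IH // exprS EFinM.
Qed.

Definition Ev K := Cyl (iota 1 K.+1) (fun i => i != K.+1).
Definition Ev2 K := Cyl (iota 1 K.+2) (fun i => i != K.+1).

Lemma all_iota n : all (fun i => 0 < i)%N (iota 1 n).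
Proof. by apply/allP => i; rewrite mem_iota => /andP[]. Qed.

Lemma EvE K w : Ev K w <-> (forall i, (0 < i <= K)%N -> X i w) /\ X K.+1 w = false.
Proof.
rewrite /Ev /Cyl; split.
- move=> H; split.
    move=> i /andP[i0 iK]; have := H i; rewrite mem_iota i0 add1n ltnS leqW //.
    by move=> /(_ isT) ->; rewrite neq_ltn ltnS iK.
  by have := H K.+1; rewrite mem_iota /= add1n ltnS leqnn eqxx => /(_ isT).
- case=> H1 H2 i; rewrite mem_iota add1n ltnS => /andP[i0 iK].
  case: (ltngtP i K.+1) => [iK'|iK'|->]; last by rewrite H2.
    by rewrite H1 // i0 -ltnS.
  by move: iK; rewrite leqNgt iK'.
Qed.

Lemma Ev2E K w : Ev2 K w <-> Ev K w /\ X K.+2 w.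
Proof.
rewrite EvE /Ev2 /Cyl; split.
- move=> H; split; last first.
    by have := H K.+2; rewrite mem_iota add1n ltnS leqnn /= neq_ltn ltnSn orbT => /(_ isT).
  split.
    move=> i /andP[i0 iK]; have := H i; rewrite mem_iota i0 add1n ltnS (leq_trans iK (leqW (leqnSn K))).
    by move=> /(_ isT) ->; rewrite neq_ltn ltnS iK.
  by have := H K.+1; rewrite mem_iota /= add1n ltnS leqnSn eqxx => /(_ isT).
- case=> [[H1 H2] H3] i; rewrite mem_iota add1n ltnS => /andP[i0 iK].
  case: (ltngtP i K.+1) => [iK'|iK'|->]; last by rewrite H2.
    by rewrite H1 // i0 -ltnS.
  have -> : i = K.+2 by apply/eqP; rewrite eqn_leq iK iK'.
  by rewrite H3.
Qed.

Lemma mEv K : measurable (Ev K). Proof. exact: mCyl (all_iota _). Qed.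
Lemma mEv2 K : measurable (Ev2 K). Proof. exact: mCyl (all_iota _). Qed.
Lemma PEv K : P (Ev K) = (((2%:R^-1 : R)) ^+ K.+1)%:E.
Proof. by rewrite PCyl ?iota_uniq ?all_iota // size_iota. Qed.
Lemma PEv2 K : P (Ev2 K) = (((2%:R^-1 : R)) ^+ K.+2)%:E.
Proof. by rewrite PCyl ?iota_uniq ?all_iota // size_iota. Qed.

Lemma Ev_disj K n w : (K < n)%N -> Ev K w -> Ev n w -> False.
Proof.
move=> Kn /EvE[_ H1] /EvE[H2 _].
by rewrite H2 // in H1; rewrite ltn0Sn.
Qed.

Lemma union_prob (G : nat -> set T) (v : nat -> R) l :
  (forall K, measurable (G K)) ->
  (forall K n w, (K < n)%N -> G K w -> G n w -> False) ->
  v 0%N = 0 -> (forall n, P (G n) = (v n.+1 - v n)%:E) ->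
  v n @[n --> \oo] --> l ->
  measurable (\bigcup_K G K) /\ P (\bigcup_K G K) = l%:E.
Proof.
move=> mG dG v0 PG vl.
pose FG n := [set w | exists K, (K < n)%N /\ G K w].
have FGS n : FG n.+1 = FG n `|` G n.
  apply/seteqP; split => w /=.
    case=> K [Kn HK]; move: Kn; rewrite ltnS leq_eqVlt => /orP[/eqP <-|Kn].
      by right.
    by left; exists K.
  by case=> [[K [Kn HK]]|Hn]; [exists K; split => //; rewrite ltnW | exists n].
have FG0 : FG 0%N = set0 by apply/seteqP; split => w // [K []].
have mFG n : measurable (FG n).
  elim: n => [|n IH]; first by rewrite FG0.
  by rewrite FGS; apply: measurableU.
have PFG n : P (FG n) = (v n)%:E.
  elim: n => [|n IH]; first by rewrite FG0 measure0 v0.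
  rewrite FGS measureU //.
    transitivity ((v n)%:E + (v n.+1 - v n)%:E); first by rewrite -IH -PG.
    by rewrite -EFinD addrC subrK.
  by apply/seteqP; split => w // [[K [Kn HK]] Hn]; apply: (dG K n w).
have UE : \bigcup_n FG n = \bigcup_K G K.
  apply/seteqP; split => w /=.
    by case=> n _ [K [_ HK]]; exists K.
  by case=> K _ HK; exists K.+1 => //; exists K.
have mU : measurable (\bigcup_K G K) by rewrite -UE; exact: bigcupT_measurable.
split => //.
have nd : nondecreasing_seq FG.
  move=> n m nm; apply/subsetPset => w [K [Kn HK]]; exists K; split => //.
  exact: leq_trans Kn nm.
have mU' : measurable (\bigcup_n FG n) by rewrite UE.
have H1 := nondecreasing_cvg_mu (mu := P) mFG mU' nd.
rewrite UE in H1.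
have H2 : (P \o FG) @ \oo --> l%:E.
  have -> : P \o FG = (fun n => (v n)%:E) by apply/funext => n /=; rewrite PFG.
  by apply/fine_cvgP; split => //; near=> n.
exact: (cvg_unique (@ereal_hausdorff R) H1 H2).
Unshelve. all: by end_near.
Qed.

End Prob.

Section Main.
Local Open Scope classical_set_scope.
Context (d : measure_display) (T : measurableType d) (R : realType)
  (P : probability T R) (X : nat -> T -> bool).
Hypotheses (HX : fair_bernoulli P X) (HI : mutually_independent P X).
Variables (p : R) (a eps : nat -> R).
Hypotheses (p01 : 0 < p < 1) (apos : forall j, (0 < j)%N -> 0 < a j)
  (Scv : Sn a n @[n --> \oo] --> p) (eps0 : eps n @[n --> \oo] --> (0:R))
  (Hpe : forall N, (0 < N)%N -> p - Sn a N <= eps N).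

Let osK K := os apos Scv eps0 K.

Definition Good K : set T :=
  if osK K.+1 == 0%N then set0 else if osK K.+1 == 2%N then Ev X K else Ev2 X K.

Lemma osK_le K : (osK K <= 2)%N.
Proof. exact: (inv p01 apos Scv eps0 Hpe K).2. Qed.

Lemma GoodE K w : Good K w <-> Ev X K w /\ outb (osK K.+1) (X K.+2 w) = true.
Proof.
rewrite /Good /outb; have := osK_le K.+1.
case: (osK K.+1) => [|[|[|]]] //= _.
- by split => // [[]].
- by rewrite Ev2E.
- by split => // [[]].
Qed.

Lemma mGood K : measurable (Good K).
Proof.
rewrite /Good; case: ifP => _; first exact: measurable0.
case: (osK K.+1 == 2%N); [exact: (mEv HX) | exact: (mEv2 HX)].
Qed.

Lemma PGood K : P (Good K) = ((osK K.+1)%:R * hk R K.+2)%:E.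
Proof.
rewrite /Good; have := osK_le K.+1.
case: (osK K.+1) => [|[|[|]]] //= _.
- by rewrite measure0 mul0r.
- by rewrite (PEv2 HX HI) mul1r /hk exprVn.
- rewrite (PEv HX HI) /hk exprVn; congr (_%:E).
  by rewrite [in RHS]exprS invfM mulrA divff ?mul1r // pnatr_eq0.
Qed.

Lemma outputs_eq : alg_outputs_one a eps X = \bigcup_K Good K.
Proof.
apply/seteqP; split => w /=.
  move=> /(run_char apos Scv eps0) [K [H1 H2 H3]].
  by exists K => //; apply/GoodE; split; [apply/EvE|].
case=> K _ /GoodE [/EvE [H1 H2] H3].
by apply/(run_char apos Scv eps0); exists K; split.
Qed.

Lemma term_eq : alg_terminates a eps X = \bigcup_K Ev X K.
Proof.
apply/seteqP; split => w /=.
  move=> /(term_char apos Scv eps0) [K [H1 H2]].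
  by exists K => //; apply/EvE.
case=> K _ /EvE [H1 H2].
by apply/(term_char apos Scv eps0); exists K.
Qed.

Lemma part1 : measurable (alg_terminates a eps X) /\ P (alg_terminates a eps X) = 1%E.
Proof.
rewrite term_eq.
apply: (union_prob (v := fun n => 1 - hk R n)).
- exact: (mEv HX).
- move=> K n w Kn; exact: Ev_disj.
- by rewrite /hk expr0 invr1 subrr.
- move=> n; rewrite (PEv HX HI); congr (_%:E).
  rewrite /hk exprS exprVn [(2%:R ^+ n.+1)]exprS invfM; lra.
- rewrite -[X in _ --> X]subr0; apply: cvgB; first exact: cvg_cst.
  have -> : hk R = geometric 1 (2%:R^-1 : R).
    by apply/funext => n; rewrite /hk /= mul1r exprVn.
  apply: cvg_geometric; rewrite ger0_norm ?invr_ge0 ?ler0n //.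
  by rewrite invf_lt1 ?ltr1n.
Qed.

Lemma part2 : measurable (alg_outputs_one a eps X) /\ P (alg_outputs_one a eps X) = p%:E.
Proof.
rewrite outputs_eq.
apply: (union_prob (v := fun n => oA apos Scv eps0 n.+1)).
- exact: mGood.
- move=> K n w Kn /GoodE [H1 _] /GoodE [H2 _]; exact: (Ev_disj Kn H1 H2).
- by rewrite /oA /= mul0r addr0.
- move=> n; rewrite PGood; congr (_%:E).
  by rewrite oAS /Ap addrAC subrr add0r.
- exact: (oA_cvg p01 apos Scv eps0 Hpe).
Qed.
End Main.

Local Open Scope classical_set_scope.
Theorem theorem1 (R : realType) (p : R) (a : nat -> rat) (eps : nat -> R)
  (d : measure_display) (T : measurableType d) (P : probability T R)
  (X : nat -> T -> bool) :
  0 < p < 1 ->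
  (forall j, (0 < j)%N -> 0 < a j) ->
  (\sum_(1 <= j < n.+1) (ratr (a j) : R)) @[n --> \oo] --> p ->
  (forall m n, (0 < m)%N -> (m <= n)%N -> eps n <= eps m) ->
  eps N @[N --> \oo] --> (0 : R) ->
  (forall N, (0 < N)%N -> p - \sum_(1 <= j < N.+1) (ratr (a j) : R) <= eps N) ->
  fair_bernoulli P X ->
  mutually_independent P X ->
  (* (1) termination with probability 1 *)
  (measurable (alg_terminates (fun j => ratr (a j)) eps X) /\
   P (alg_terminates (fun j => ratr (a j)) eps X) = 1%E) /\
  (* (2) Pr[Y = 1] = p *)
  (measurable (alg_outputs_one (fun j => ratr (a j)) eps X) /\
   P (alg_outputs_one (fun j => ratr (a j)) eps X) = p%:E) /\
  (* (3) if all eps(N) are rational, the same algorithm run in rational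
         arithmetic has exactly the same behaviour on every coin sequence *)
  (forall e : nat -> rat, (forall N, (0 < N)%N -> eps N = ratr (e N)) ->
     forall (c : nat -> bool) (fuel : nat),
       alg_run (fun j => ratr (a j) : R) eps c fuel = alg_run a e c fuel).
Proof.
move=> p01 Ha Scv _ eps0 Hpe HX HI.
pose a' := fun j => (ratr (a j) : R).
have apos : forall j, (0 < j)%N -> 0 < a' j.
  by move=> j j0; rewrite /a' -(rmorph0 (@ratr R)) ltr_rat; apply: Ha.
have Scv' : Sn a' n @[n --> \oo] --> p by exact: Scv.
have Hpe' : forall N, (0 < N)%N -> p - Sn a' N <= eps N by exact: Hpe.
split; first exact: (part1 HX HI apos Scv' eps0).
split; first exact: (part2 HX HI p01 apos Scv' eps0 Hpe').
move=> e He c fuel; exact: alg_run_sim.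
Qed.
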